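(* Let $\mathcal{G}_{24}$ be the binary $[24,12,8]$ extended Golay code, realized as the binary linear code of length $24$ (coordinates $0,\ldots,23$) with parity-check matrix $[\mathbf{I}_{12}\,|\,\mathbf{M}]$, where $$\mathbf{M}=\begin{pmatrix} I_3 & A & A^2 & A^4\\ A & I_3 & A^4 & A^2\\ A^2 & A^4 & I_3 & A\\ A^4 & A^2 & A & I_3\end{pmatrix},\qquad A=\begin{pmatrix}1&1&1\\1&0&0\\1&0&1\end{pmatrix},$$ with matrix products over $\mathbb{F}_2$. Then $\mathbf{S}_7^{\star}(\mathcal{G}_{24})\le 14$.
   Context: For a binary matrix with columns indexed by $J=\{0,\ldots,23\}$, a row resolves a nonempty $I\subseteq J$ if its restriction to $I$ has Hamming weight exactly one; $I$ is a stopping set if no row resolves it. A parity-check matrix of $\mathcal{C}$ is a full-row-rank binary matrix whose row space is $\mathcal{C}^\perp$. $\mathrm{Aut}(\mathcal{C})$ is the group of coordinate permutations mapping $\mathcal{C}$ onto itself. For a parity-check matrix $\mathbf{H}$ of a code with minimum distance $d$ and $s\le d-1$, an $s$-SAD set of $\mathbf{H}$ is a smallest set $S\subseteq\mathrm{Aut}(\mathcal{C})$ such that every $I\subseteq J$ with $1\le|I|\le s$ is mapped by some $\pi\in S$ to a set $\pi(I)$ that is not a stopping set of $\mathbf{H}$. $\mathbf{S}_s^\star(\mathcal{C})$ is the minimum of $|S|$ over all parity-check matrices $\mathbf{H}$ of $\mathcal{C}$ admitting an $s$-SAD set $S$. *)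

(* Defs.v *)
From HB Require Import structures.
From mathcomp Require Import all_boot all_order all_algebra all_fingroup.
Set Implicit Arguments. Unset Strict Implicit. Unset Printing Implicit Defensive.
Import GRing.Theory.
Local Open Scope ring_scope.

Definition golayA : 'M['F_2]_3 :=
  \matrix_(i < 3, j < 3)
    (if (i == 0%N :> nat) then 1
     else if (i == 1%N :> nat) then (if j == 0%N :> nat then 1 else 0)
     else (if (j == 1%N :> nat) then 0 else 1)).

(* exponent of A in block (a,b) of M; exponent 0 means I_3 *)
Definition golay_exp (a b : nat) : nat :=
  nth 0%N (nth [::] [:: [:: 0; 1; 2; 4]; [:: 1; 0; 4; 2];
                        [:: 2; 4; 0; 1]; [:: 4; 2; 1; 0]]%N a) b.

Definition golayM : 'M['F_2]_12 :=
  \matrix_(i < 12, j < 12)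
    ((golayA ^+ golay_exp (i %/ 3) (j %/ 3)) (inord (i %% 3)) (inord (j %% 3))).

Definition golayH0 : 'M['F_2]_(12, 24) := row_mx 1%:M golayM.

Definition G24 : {set 'rV['F_2]_24} := [set v | golayH0 *m v^T == 0].

Definition dual_code n (C : {set 'rV['F_2]_n}) : {set 'rV['F_2]_n} :=
  [set x | [forall c in C, x *m c^T == 0]].

Definition is_parity_check n m (C : {set 'rV['F_2]_n}) (H : 'M['F_2]_(m, n)) :=
  row_free H /\ forall x : 'rV['F_2]_n, (x <= H)%MS <-> x \in dual_code C.

(* coordinate permutation: coordinate i moves to s i *)
Definition perm_vec n (s : {perm 'I_n}) (v : 'rV['F_2]_n) : 'rV['F_2]_n :=
  \row_j v 0 ((s^-1)%g j).

Definition Aut_code n (C : {set 'rV['F_2]_n}) : {set {perm 'I_n}} :=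
  [set s | [set perm_vec s c | c in C] == C].

Definition resolves n m (H : 'M['F_2]_(m, n)) (r : 'I_m) (I : {set 'I_n}) :=
  #|[set j in I | H r j != 0]| == 1%N.

Definition stopping_set n m (H : 'M['F_2]_(m, n)) (I : {set 'I_n}) :=
  (I != set0) && [forall r, ~~ resolves H r I].

(* S is an s-SAD-covering set (not necessarily smallest) *)
Definition SAD_cover n m (C : {set 'rV['F_2]_n}) (H : 'M['F_2]_(m, n)) (s : nat)
  (S : {set {perm 'I_n}}) :=
  S \subset Aut_code C /\
  forall I : {set 'I_n}, (1 <= #|I| <= s)%N ->
    exists2 p, p \in S & ~~ stopping_set H (p @: I).

(* Main.v *)
Require Import Defs.
From HB Require Import structures.
From mathcomp Require Import all_boot all_order all_algebra all_fingroup.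
Set Implicit Arguments. Unset Strict Implicit. Unset Printing Implicit Defensive.
Definition htab : seq (seq bool) := [::
  [:: true; false; false; false; false; false; false; false; false; false; false; false; true; false; false; true; true; true; true; true; false; false; false; true];
  [:: false; true; false; false; false; false; false; false; false; false; false; false; false; true; false; true; false; false; true; true; true; false; true; true];
  [:: false; false; true; false; false; false; false; false; false; false; false; false; false; false; true; true; false; true; false; true; false; true; true; true];
  [:: false; false; false; true; false; false; false; false; false; false; false; false; true; true; true; true; false; false; false; false; true; true; true; false];
  [:: false; false; false; false; true; false; false; false; false; false; false; false; true; false; false; false; true; false; false; true; true; true; true; true];
  [:: false; false; false; false; false; true; false; false; false; false; false; false; true; false; true; false; false; true; true; true; true; false; true; false];
  [:: false; false; false; false; false; false; true; false; false; false; false; false; true; true; false; false; false; true; true; false; false; true; true; true];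
  [:: false; false; false; false; false; false; false; true; false; false; false; false; true; true; true; false; true; true; false; true; false; true; false; false];
  [:: false; false; false; false; false; false; false; false; true; false; false; false; false; true; false; true; true; true; false; false; true; true; false; true];
  [:: false; false; false; false; false; false; false; false; false; true; false; false; false; false; true; true; true; false; true; true; true; true; false; false];
  [:: false; false; false; false; false; false; false; false; false; false; true; false; false; true; true; true; true; true; true; false; false; false; true; false];
  [:: false; false; false; false; false; false; false; false; false; false; false; true; true; true; true; false; true; false; true; false; true; false; false; true]
].
Definition Ls : seq (seq nat) := [::
  [:: 0; 1; 2; 3; 4; 5; 6; 7; 8; 9; 10; 11; 12; 13; 14; 15; 16; 17; 18; 19; 20; 21; 22; 23];
  [:: 14; 4; 23; 22; 19; 12; 20; 17; 0; 6; 21; 18; 5; 15; 13; 3; 10; 9; 7; 11; 1; 8; 16; 2];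
  [:: 21; 17; 5; 15; 0; 1; 22; 12; 13; 18; 19; 8; 23; 4; 9; 3; 20; 2; 16; 7; 6; 11; 10; 14];
  [:: 3; 22; 18; 4; 15; 14; 9; 0; 10; 19; 23; 20; 7; 1; 2; 17; 21; 16; 11; 8; 6; 13; 12; 5];
  [:: 9; 20; 16; 12; 21; 0; 11; 8; 10; 22; 7; 5; 2; 18; 19; 14; 1; 4; 17; 3; 6; 13; 15; 23]
]%N.

Definition hb (r j : nat) : bool := nth false (nth [::] htab r) j.

Definition pairs : seq (seq nat * nat) := [seq (pl, r) | pl <- Ls, r <- iota 0 12].
Definition hitf (pr : seq nat * nat) (i : nat) : bool := hb pr.2 (nth 0 pr.1 i).

Definition addv (a : seq nat) (b : seq bool) : seq nat := [seq x.1 + nat_of_bool x.2 | x <- zip a b].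

Fixpoint chkFrom (col : nat -> seq bool) (d lo : nat) (cnts : seq nat) : bool :=
  all (fun i => let c' := addv cnts (col i) in
                has (pred1 1) c' && (if d is d'.+1 then chkFrom col d' i.+1 c' else true))
      (iota lo (24 - lo)).

Definition coltab : seq (seq bool) := [seq [seq hitf pr i | pr <- pairs] | i <- iota 0 24].

Definition checker : bool :=
  let tbl := coltab in chkFrom (fun i => nth [::] tbl i) 6 0 (nseq (size pairs) 0).
Lemma checker_ok : checker. Proof. vm_compute. reflexivity. Qed.

Import GRing.Theory.

Definition cntsOf (col : nat -> seq bool) (c : seq nat) (L : seq nat) :=
  foldl (fun c i => addv c (col i)) c L.

Lemma chkFrom_sound col d lo cnts L :
  chkFrom col d lo cnts -> sorted ltn L -> L != [::] ->
  all (fun x => (lo <= x) && (x < 24)) L -> (size L <= d.+1)%N ->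
  has (pred1 1%N) (cntsOf col cnts L).
Proof.
elim: d lo cnts L => [|d IH] lo cnts [|i L] // Hc Hs _ Hall Hsz.
- move: Hsz; rewrite /= ltnS leqn0 => /nilP ->.
  move/andP: Hall => [/andP [Hlo Hhi] _].
  have Hi : i \in iota lo (24 - lo) by rewrite mem_iota Hlo subnKC // ltnW // (leq_ltn_trans Hlo Hhi).
  by move/allP: Hc => /(_ i Hi) /andP [].
- move/andP: Hall => [/andP [Hlo Hhi] Hall].
  have Hi : i \in iota lo (24 - lo) by rewrite mem_iota Hlo subnKC // ltnW // (leq_ltn_trans Hlo Hhi).
  move/allP: Hc => /(_ i Hi) /andP [H1 H2].
  case: L Hs Hall Hsz => [|k L] Hs Hall Hsz; first by [].
  have -> : cntsOf col cnts [:: i, k & L] = cntsOf col (addv cnts (col i)) (k :: L) by [].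
  apply: (IH i.+1 _ (k :: L) H2) => //.
  + exact: (path_sorted Hs).
  + have Hm := order_path_min ltn_trans Hs.
    apply/allP => x Hx; move/allP: Hm => /(_ x Hx) -> /=.
    have Hall2 : all (fun x => (lo <= x) && (x < 24))%N (k :: L) := Hall.
    by move/allP: Hall2 => /(_ x Hx) /andP [].
Qed.

Lemma addv_map (T : Type) (s : seq T) (f : T -> nat) (g : T -> bool) :
  addv (map f s) (map g s) = map (fun x => f x + g x)%N s.
Proof. by elim: s => //= x s IH; congr (_ :: _); exact: IH. Qed.

Lemma cntsOf_map col L : (forall i, i \in L -> col i = [seq hitf pr i | pr <- pairs]) ->
  forall L0, cntsOf col [seq count (hitf pr) L0 | pr <- pairs] L =
             [seq count (hitf pr) (L0 ++ L) | pr <- pairs].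
Proof.
elim: L => [|i L IH] Hcol L0; first by rewrite /= cats0.
rewrite (_ : cntsOf col _ (i :: L) = cntsOf col (addv [seq count (hitf pr) L0 | pr <- pairs] (col i)) L) //.
rewrite Hcol ?mem_head // (addv_map pairs (fun pr => count (hitf pr) L0) (fun pr => hitf pr i)).
have -> : [seq (count (hitf x) L0 + hitf x i)%N | x <- pairs] =
          [seq count (hitf x) (L0 ++ [:: i]) | x <- pairs].
  by apply: eq_map => x; rewrite count_cat /= addn0.
by rewrite IH -?catA // => j Hj; apply: Hcol; rewrite inE Hj orbT.
Qed.

Lemma map0_nseq (T : Type) (s : seq T) : [seq 0%N | _ <- s] = nseq (size s) 0%N.
Proof. by elim: s => //= x s IH; congr (_ :: _); exact: IH. Qed.

Lemma cover_all L : sorted ltn L -> L != [::] -> all (fun x => x < 24)%N L -> (size L <= 7)%N ->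
  exists2 pr, pr \in pairs & count (hitf pr) L == 1%N.
Proof.
move=> Hs Hn Ha Hsz.
have H := chkFrom_sound checker_ok Hs Hn.
have Hall : all (fun x => (0 <= x) && (x < 24))%N L by [].
have Hc : forall i, i \in L -> nth [::] coltab i = [seq hitf pr i | pr <- pairs].
  move=> i Hi; have Hi24 : (i < 24)%N by move/allP: Ha => /(_ i Hi).
  by rewrite /coltab (nth_map 0%N) ?size_iota // nth_iota.
have E := cntsOf_map Hc [::].
have H' := H Hall Hsz.
have E0 : nseq (size pairs) 0%N = [seq count (hitf pr) [::] | pr <- pairs].
  by rewrite -map0_nseq; apply: eq_map.
rewrite E0 in H'.
have H'' : has (pred1 1%N) (cntsOf (nth [::] coltab) [seq count (hitf pr) [::] | pr <- pairs] L) := H'.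
rewrite E cat0s has_map in H''.
case/hasP: H'' => pr Hpr /= /eqP Hc1; exists pr => //; exact/eqP.
Qed.

Local Open Scope ring_scope.

Definition apow (k : nat) : seq (seq bool) :=
  match k with
  | 0 => [:: [:: true; false; false]; [:: false; true; false]; [:: false; false; true]]
  | 1 => [:: [:: true; true; true]; [:: true; false; false]; [:: true; false; true]]
  | 2 => [:: [:: true; true; false]; [:: true; true; true]; [:: false; true; false]]
  | _ => [:: [:: false; false; true]; [:: false; true; true]; [:: true; true; true]]
  end%N.
Definition ab (k i j : nat) : bool := nth false (nth [::] (apow k) i) j.

Lemma A1E (i j : 'I_3) : golayA i j = (ab 1 i j)%:R.
Proof.
rewrite /golayA mxE.
by case: i => [[|[|[|i]]] Hi] //; case: j => [[|[|[|j]]] Hj] //; apply/eqP.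
Qed.

Lemma A2E (i j : 'I_3) : (golayA ^+ 2) i j = (ab 2 i j)%:R.
Proof.
rewrite expr2 mxE !big_ord_recr big_ord0 /= !A1E.
by case: i => [[|[|[|i]]] Hi] //; case: j => [[|[|[|j]]] Hj] //; apply/eqP.
Qed.

Lemma A4E (i j : 'I_3) : (golayA ^+ 4) i j = (ab 4 i j)%:R.
Proof.
rewrite (_ : 4 = 2 + 2)%N // exprD mxE !big_ord_recr big_ord0 /= !A2E.
by case: i => [[|[|[|i]]] Hi] //; case: j => [[|[|[|j]]] Hj] //; apply/eqP.
Qed.

Lemma A0E (i j : 'I_3) : (golayA ^+ 0) i j = (ab 0 i j)%:R.
Proof.
rewrite expr0 mxE.
by case: i => [[|[|[|i]]] Hi] //; case: j => [[|[|[|j]]] Hj] //; apply/eqP.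
Qed.

Lemma ApowE k (i j : 'I_3) : k \in [:: 0; 1; 2; 4]%N -> (golayA ^+ k) i j = (ab k i j)%:R.
Proof.
rewrite !inE => /or4P [] /eqP ->; [exact: A0E | by rewrite expr1 A1E | exact: A2E | exact: A4E].
Qed.

Lemma all_iota (P : nat -> bool) n : all P (iota 0 n) -> forall i, (i < n)%N -> P i.
Proof. by move/allP => H i Hi; apply: H; rewrite mem_iota. Qed.

Definition blockcheck :=
  all (fun i => all (fun k => (golay_exp (i %/ 3) (k %/ 3) \in [:: 0; 1; 2; 4]%N) &&
     (hb i (12 + k) == ab (golay_exp (i %/ 3) (k %/ 3)) (i %% 3) (k %% 3))
     && (hb i k == (i == k))) (iota 0 12)) (iota 0 12).
Lemma blockcheck_ok : blockcheck. Proof. by vm_compute. Qed.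

Lemma H0E (i : 'I_12) (j : 'I_24) : golayH0 i j = (hb i j)%:R.
Proof.
have Hb := all_iota blockcheck_ok (ltn_ord i).
rewrite /golayH0 mxE; case: splitP => k Hk.
- rewrite mxE Hk.
  move/all_iota: Hb => /(_ k (ltn_ord k)) /andP [_ /eqP ->].
  by have -> : (i == k :> nat) = (i == k) by [].
- move/all_iota: Hb => /(_ k (ltn_ord k)) /andP [/andP [Hin /eqP Hab] _].
  rewrite /golayM mxE ApowE // Hk Hab !inordK //; exact: ltn_pmod.
Qed.

Definition permok (l : seq nat) := [&& uniq l, size l == 24%N & all (fun x => x < 24)%N l].

Definition mkf (l : seq nat) (i : 'I_24) : 'I_24 := if permok l then inord (nth 0%N l i) else i.

Lemma mkf_inj l : injective (mkf l).
Proof.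
rewrite /mkf; case: (boolP (permok l)) => [H|_] i j //.
case/and3P: H => Hu /eqP Hs Ha E; have := congr1 (@nat_of_ord 24) E.
have Hlt (k : 'I_24) : (nth 0%N l k < 24)%N by apply: (allP Ha); rewrite mem_nth // Hs.
rewrite !inordK // => /eqP; rewrite nth_uniq ?Hs // => /eqP; exact: val_inj.
Qed.

Definition mkperm (l : seq nat) : {perm 'I_24} := perm (@mkf_inj l).

Lemma mkpermE l (i : 'I_24) : permok l -> val (mkperm l i) = nth 0%N l i.
Proof.
move=> H; rewrite permE /mkf H /= inordK //; case/and3P: H => _ /eqP Hs Ha.
by apply: (allP Ha); rewrite mem_nth // Hs.
Qed.

Lemma Ls_ok : all permok Ls. Proof. by vm_compute. Qed.

Definition S5 : {set {perm 'I_24}} := [set x in map mkperm Ls].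

Lemma sumF2 n (f : 'I_n -> bool) :
  \sum_(l < n) ((f l)%:R : 'F_2) = (odd (\sum_(l < n) f l))%:R.
Proof.
elim/big_rec2: _ => // i y x _ ->.
by rewrite oddD; case: (f i); case: (odd y); apply/eqP.
Qed.

Lemma sum_iota n (F : nat -> nat) : \sum_(l < n) F l = sumn [seq F l | l <- iota 0 n].
Proof. by rewrite -(big_mkord xpredT) sumnE big_map /index_iota subn0. Qed.

Lemma mulF2 (a b : bool) : (a%:R * b%:R : 'F_2) = (a && b)%:R.
Proof. by case: a; case: b; rewrite ?mul1r ?mul0r. Qed.

Definition autcheck :=
  all (fun pl => all (fun r => all (fun i => hb r (nth 0%N pl i) ==
     odd (sumn [seq nat_of_bool (hb r (nth 0%N pl l) && hb l i) | l <- iota 0 12]))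
     (iota 0 24)) (iota 0 12)) Ls.
Lemma autcheck_ok : autcheck. Proof. by vm_compute. Qed.

Lemma aut_of (s : {perm 'I_24}) :
  (forall r : 'I_12, exists t : 'rV['F_2]_12, \row_i golayH0 r (s i) = t *m golayH0) ->
  s \in Aut_code G24.
Proof.
move=> Hr; rewrite inE eqEcard; apply/andP; split.
- apply/subsetP => _ /imsetP [c Hc ->]; move: Hc; rewrite !inE => /eqP Hc.
  apply/eqP/matrixP => r j; rewrite (ord1 j) [RHS]mxE mxE.
  have [t Ht] := Hr r.
  have E : (\row_i golayH0 r (s i) *m c^T) 0 0 = 0 by rewrite Ht -mulmxA Hc mulmx0 mxE.
  apply: (etrans _ E); rewrite [RHS]mxE (reindex_inj (@perm_inj _ s)) /=.
  by apply: eq_bigr => i _; rewrite !mxE permK.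
- rewrite card_imset // => v w /matrixP H; apply/matrixP => i j.
  by rewrite (ord1 i); have := H 0 (s j); rewrite !mxE permK.
Qed.

Lemma S5_aut : S5 \subset Aut_code G24.
Proof.
apply/subsetP => s; rewrite inE => /mapP [pl Hpl ->]; apply: aut_of => r.
have Hok : permok pl by apply: (allP Ls_ok).
exists (\row_(l < 12) (hb r (nth 0%N pl l))%:R).
apply/matrixP => i j; rewrite (ord1 i) [LHS]mxE H0E mkpermE // [RHS]mxE.
under eq_bigr => l _ do rewrite H0E mxE mulF2.
rewrite sumF2 (sum_iota 12 (fun l => nat_of_bool (hb r (nth 0%N pl l) && hb l j))).
move/allP: autcheck_ok => /(_ pl Hpl) /all_iota /(_ r (ltn_ord r)) /all_iota /(_ j (ltn_ord j)) /eqP ->.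
done.
Qed.

Lemma H0_free : row_free golayH0.
Proof.
apply/row_freeP; exists (col_mx (1%:M : 'M['F_2]_12) (0 : 'M['F_2]_(12,12))).
have := mul_row_col (1%:M : 'M['F_2]_12) golayM 1%:M 0.
rewrite mul1mx mulmx0 addr0 => H; exact: H.
Qed.

Lemma G24E c : (c \in G24) = (c <= kermx golayH0^T)%MS.
Proof. by rewrite inE sub_kermx -trmx_eq0 trmx_mul trmxK. Qed.

Lemma dualE x : (x <= golayH0)%MS <-> x \in dual_code G24.
Proof.
set K := kermx golayH0^T.
split.
- case/submxP => D ->; rewrite inE; apply/forallP => c; apply/implyP; rewrite inE => /eqP Hc.
  by rewrite -mulmxA Hc mulmx0.
- rewrite inE => /forallP Hx.
  have HxK : (x <= kermx K^T)%MS.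
    rewrite sub_kermx -trmx_eq0 trmx_mul trmxK; apply/eqP/row_matrixP => i.
    rewrite row_mul row0.
    have : row i K \in G24 by rewrite G24E row_sub.
    move/(implyP (Hx _)) => /eqP h.
    by rewrite -(trmxK (row i K *m x^T)) trmx_mul trmxK h trmx0.
  have sH : (golayH0 <= kermx K^T)%MS.
    by rewrite sub_kermx -trmx_eq0 trmx_mul trmxK mulmx_ker.
  have Hrk : \rank (kermx K^T) = \rank golayH0.
    by rewrite mxrank_ker mxrank_tr mxrank_ker mxrank_tr subKn // rank_leq_col.
  have [_ /esym] := mxrank_leqif_sup sH; rewrite Hrk eqxx => Hs.
  exact: submx_trans HxK Hs.
Qed.

Lemma H0_pc : is_parity_check G24 golayH0.
Proof. split; [exact: H0_free | exact: dualE]. Qed.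

Lemma card_set24 (A : {set 'I_24}) : #|A| = count (fun n => inord n \in A) (iota 0 24).
Proof.
rewrite cardE /enum_mem -enumT size_filter -val_enum_ord count_map.
by apply: eq_count => i /=; rewrite inord_val.
Qed.

Lemma nzF2 (b : bool) : ((b%:R : 'F_2) != 0) = b.
Proof. by case: b. Qed.

Theorem theorem9 :
  exists (m : nat) (H : 'M['F_2]_(m, 24)) (S : {set {perm 'I_24}}),
    is_parity_check G24 H /\ SAD_cover G24 H 7 S /\ (#|S| <= 14)%N.
Proof.
exists 12%N, golayH0, S5; split; first exact: H0_pc.
split; last by rewrite cardsE (leq_trans (card_size _)) // size_map.
split; first exact: S5_aut.
move=> I /andP [H1 H7].
set L := [seq n <- iota 0 24 | inord n \in I].
have HL : #|I| = size L by rewrite card_set24 size_filter.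
have Hs : sorted ltn L by apply: sorted_filter; [exact: ltn_trans | exact: iota_ltn_sorted].
have Hn : L != [::] by rewrite -size_eq0 -HL -lt0n.
have Ha : all (fun x => x < 24)%N L.
  by apply/allP => x; rewrite mem_filter mem_iota => /andP [_ /andP [_ ]].
have Hsz : (size L <= 7)%N by rewrite -HL.
have [[pl r] Hpr Hc] := cover_all Hs Hn Ha Hsz.
case/allpairsP: Hpr => -[a b] [Ha' Hb [E1 E2]]; subst a b.
have Hok : permok pl by apply: (allP Ls_ok).
have Hr : (r < 12)%N by move: Hb; rewrite mem_iota.
set p := mkperm pl.
exists p; first by rewrite inE; apply: map_f.
rewrite /stopping_set negb_and; apply/orP; right; rewrite negb_forall; apply/existsP.
exists (inord r : 'I_12); rewrite negbK /resolves.
have E : [set j in p @: I | golayH0 (inord r) j != 0] =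
         p @: [set i in I | golayH0 (inord r) (p i) != 0].
  apply/setP => j; rewrite inE; apply/andP/imsetP.
  - by case=> /imsetP [i Hi ->] Hh; exists i => //; rewrite inE Hi Hh.
  - by case=> i; rewrite inE => /andP [Hi Hh] ->; split => //; exact: imset_f.
rewrite E card_imset; last exact: perm_inj.
rewrite card_set24; move: Hc; rewrite /L count_filter => /eqP Hc; apply/eqP; apply: (etrans _ Hc).
apply: eq_in_count => n; rewrite mem_iota /= => Hn24.
by rewrite inE H0E mkpermE // !inordK // nzF2 andbC.
Qed.
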